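(* Let $P$ be an integer and $m\ge 0$ an integer. Consider the equation $$\sigma_2(n)-n^2=V_{2m}(P,-1)\,n-U_{2m}(P,-1)^2+1$$ in positive integers $n$. Then every solution $n$ with $n>\big(|V_{2m}(P,-1)|+U_{2m}(P,-1)^2-1\big)^3$ is of one of the following forms (so all solutions not of these forms lie in the finite, computable range $n\le(|V_{2m}(P,-1)|+U_{2m}(P,-1)^2-1)^3$): (1) $n=U_{2k+1}(P,-1)\,U_{2k+2m+1}(P,-1)$ for some integer $k\ge 0$, with $U_{2k+1}(P,-1)$ and $U_{2k+2m+1}(P,-1)$ both prime; (2) $n=U_{2k+1}(P,-1)\,U_{2m-2k-1}(P,-1)$ for some integer $k$ with $0\le k\le m-1$ and $m\ne 2k+1$, with $U_{2k+1}(P,-1)$ and $U_{2m-2k-1}(P,-1)$ both prime.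
   Context: For a positive integer $n$ and $k\ge 0$, $\sigma_k(n)=\sum_{d\mid n,\ d>0} d^k$. For integers $P,Q$, the Lucas sequences are defined for $j\ge 0$ by $U_0(P,Q)=0$, $U_1(P,Q)=1$, $U_j(P,Q)=P\,U_{j-1}(P,Q)-Q\,U_{j-2}(P,Q)$ for $j>1$, and $V_0(P,Q)=2$, $V_1(P,Q)=P$, $V_j(P,Q)=P\,V_{j-1}(P,Q)-Q\,V_{j-2}(P,Q)$ for $j>1$. *)

(* Defs.v *)
From mathcomp Require Import all_boot all_order all_algebra.
Set Implicit Arguments. Unset Strict Implicit. Unset Printing Implicit Defensive.
Import Order.TTheory GRing.Theory Num.Theory.
Local Open Scope ring_scope.

Definition sigma (k n : nat) : nat := (\sum_(d <- divisors n) d ^ k)%N.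

Fixpoint lucasU (P Q : int) (j : nat) : int :=
  match j with
  | 0%N => 0
  | S j1 => match j1 with
            | 0%N => 1
            | S j0 => P * lucasU P Q j1 - Q * lucasU P Q j0
            end
  end.

Fixpoint lucasV (P Q : int) (j : nat) : int :=
  match j with
  | 0%N => 2
  | S j1 => match j1 with
            | 0%N => P
            | S j0 => P * lucasV P Q j1 - Q * lucasV P Q j0
            end
  end.

Definition int_prime (z : int) : Prop := exists p : nat, prime p /\ z = p%:Z.

(* Main.v *)
Require Import Defs.
From mathcomp Require Import all_boot all_order all_algebra.
From mathcomp Require Import zify ring lra.
Import Order.TTheory GRing.Theory Num.Theory.
Local Open Scope ring_scope.

Notation U P j := (lucasU P (-1) j).
Notation V P j := (lucasV P (-1) j).

Lemma Urec P j : U P j.+2 = P * U P j.+1 + U P j.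
Proof. by rewrite /= mulN1r opprK. Qed.
Lemma Vrec P j : V P j.+2 = P * V P j.+1 + V P j.
Proof. by rewrite /= mulN1r opprK. Qed.
Lemma U0 P : U P 0 = 0. Proof. by []. Qed.
Lemma U1 P : U P 1 = 1. Proof. by []. Qed.

Lemma two_ind (Pr : nat -> Prop) : Pr 0%N -> Pr 1%N -> (forall j, Pr j -> Pr j.+1 -> Pr j.+2) -> forall j, Pr j.
Proof.
move=> h0 h1 hs j; suff: Pr j /\ Pr j.+1 by case.
elim: j => [|j [a b]]; first by split.
by split => //; apply: hs.
Qed.

Lemma VU P j : V P j = 2 * U P j.+1 - P * U P j.
Proof.
elim/two_ind: j => [|| j h1 h2]; first by rewrite /=; ring.
  by rewrite /=; ring.
by rewrite Vrec !Urec h1 h2 Urec; ring.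
Qed.

Lemma Gid P j : U P j.+1 ^+ 2 - P * U P j.+1 * U P j - U P j ^+ 2 = (-1) ^+ j.
Proof.
elim: j => [|j ih]; first by rewrite /=; ring.
by rewrite Urec [(-1) ^+ j.+1]exprS -ih; ring.
Qed.

Lemma Uadd P a b : U P (a + b).+1 = U P a.+1 * U P b.+1 + U P a * U P b.
Proof.
elim/two_ind: b => [|| b h1 h2].
- by rewrite addn0 /=; ring.
- by rewrite addn1 Urec /=; ring.
rewrite addnS in h2; rewrite !addnS Urec h2 h1 [U P b.+3]Urec [U P b.+2]Urec; ring.
Qed.

Lemma Udoc P a b : U P (a + b) * U P b.+1 - U P (a + b).+1 * U P b = (-1) ^+ b * U P a.
Proof.
elim: b => [|b ih]; first by rewrite addn0 /=; ring.
by rewrite addnS !Urec [(-1) ^+ b.+1]exprS -mulrA -ih; ring.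
Qed.

Lemma UN P j : U (- P) j = if odd j then U P j else - U P j.
Proof.
elim/two_ind: j => [|| j h1 h2]; first by rewrite /=; ring.
  by [].
rewrite !Urec h1 h2 /=; case: (odd j) => /=; ring.
Qed.

Lemma VN P j : V (- P) j = if odd j then - V P j else V P j.
Proof.
elim/two_ind: j => [|| j h1 h2]; first by [].
  by [].
rewrite !Vrec h1 h2 /=; case: (odd j) => /=; ring.
Qed.

Lemma Uge0 P j : 0 <= P -> 0 <= U P j.
Proof.
move=> hP; elim/two_ind: j => [|| j h1 h2] //; rewrite Urec.
by apply: addr_ge0 => //; apply: mulr_ge0.
Qed.

Lemma Vge2 P m : 0 <= P -> 2 <= V P (2 * m).
Proof.
move=> hP.
have Vge0 : forall j, 0 <= V P j.
  by elim/two_ind => [|| j h1 h2] //; rewrite Vrec; apply: addr_ge0 => //; apply: mulr_ge0.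
elim: m => [|m ih] //; rewrite mulnS add2n Vrec.
by apply: (le_trans ih); rewrite lerDr; apply: mulr_ge0.
Qed.
Lemma Lclass P : 0 <= P -> forall a b : int, 0 < a -> 0 <= b ->
  (a ^+ 2 - P * a * b - b ^+ 2 = 1 \/ a ^+ 2 - P * a * b - b ^+ 2 = -1) ->
  exists j, a = U P j.+1 /\ b = U P j.
Proof.
move=> hP a b ha hb hG.
suff: forall N : nat, forall a b : int, 0 < a -> a <= N%:Z -> 0 <= b ->
  (a ^+ 2 - P * a * b - b ^+ 2 = 1 \/ a ^+ 2 - P * a * b - b ^+ 2 = -1) ->
  exists j, a = U P j.+1 /\ b = U P j.
  by move=> /(_ `|a|%N a b ha); apply => //; lia.
clear a b ha hb hG.
elim=> [|N ih] a b ha haN hb hG; first lia.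
have [b0|bpos] := eqVneq b 0.
  exists 0%N; rewrite b0 /=; split => //.
  move: hG; rewrite b0; nia.
have {hb bpos}hb : 0 < b by lia.
have [P0|Ppos] := eqVneq P 0.
  exfalso; rewrite P0 mul0r mul0r subr0 in hG.
  case: hG => hG; case: (ltrgtP a b) => hab; try nia;
  by move: hG; rewrite hab subrr.
have {Ppos}hP1 : 0 < P by lia.
have hc : 0 <= a - P * b.
  rewrite subr_ge0; case: (lerP (P * b) a) => // hlt; exfalso.
  case: hG => hG; nia.
have [c0|cpos] := eqVneq (a - P * b) 0.
  have ea : a = P * b by lia.
  have eb : b = 1.
    move: hG; rewrite ea; case => hG; nia.
  by exists 1%N; rewrite Urec /= ea eb; split => //; ring.
have hcp : 0 < a - P * b by lia.
have [j [e1 e2]] : exists j, b = U P j.+1 /\ a - P * b = U P j.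
  apply: ih => //; first nia.
  case: hG => hG; [right|left].
  - by rewrite -[RHS]opprK -hG; ring.
  - by rewrite -[RHS]opprK -hG; ring.
exists j.+1; split => //.
by rewrite Urec -e1 -e2; ring.
Qed.
Local Open Scope nat_scope.
Lemma sigma_lb n t : (0 < n)%N -> uniq t -> all (dvdn^~ n) t ->
  (\sum_(d <- t) d ^ 2 <= sigma 2 n)%N.
Proof.
move=> n0 ut at_.
rewrite /sigma.
have pe : perm_eq [seq d <- divisors n | d \in t] t.
  apply: uniq_perm; first exact: filter_uniq (divisors_uniq n).
    exact: ut.
  move=> d; rewrite mem_filter; apply/andP/idP => [[]//|dt]; split => //.
  by rewrite -dvdn_divisors //; move/allP: at_; apply.
rewrite -(perm_big _ pe) big_filter.
rewrite [X in (_ <= X)%N](bigID (fun d => d \in t)) /=.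
exact: leq_addr.
Qed.

Lemma sigma_exact n t : (0 < n)%N -> uniq t -> (forall d, (d %| n) = (d \in t)) ->
  sigma 2 n = (\sum_(d <- t) d ^ 2)%N.
Proof.
move=> n0 ut ht; rewrite /sigma; apply: perm_big; apply: uniq_perm => //.
  exact: divisors_uniq.
by move=> d; rewrite -dvdn_divisors // ht.
Qed.

Lemma dvd_pq p q d : prime p -> prime q ->
  (d %| p * q) = (d \in [:: 1; p; q; p * q])%N.
Proof.
move=> pp pq; rewrite !inE.
apply/idP/idP; last first.
  case/or4P => /eqP ->; [exact: dvd1n | exact: dvdn_mulr | exact: dvdn_mull | exact: dvdnn].
move=> h; case: (boolP (p %| d)) => hpd.
{ case/dvdnP: hpd h => e ->; rewrite mulnC dvdn_pmul2l ?prime_gt0 //.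
  case/primeP: pq => _ hq /hq /orP [] /eqP ->; by rewrite ?muln1 ?eqxx ?orbT. }
have cop : coprime d p by rewrite coprime_sym prime_coprime.
move: h; rewrite Gauss_dvdr //.
case/primeP: pq => _ hq /hq /orP [] /eqP ->; by rewrite ?eqxx ?orbT.
Qed.
Local Open Scope ring_scope.
Lemma dvd_quad (u z K L : int) : u != 0 -> z ^+ 2 = u * (K * z + u * L) -> (u %| z)%Z.
Proof.
move=> u0 hz.
set g := gcdz z u.
have g0 : g != 0 by rewrite gcdz_eq0 negb_and u0 orbT.
have ez : z = (z %/ g)%Z * g by rewrite divzK // dvdz_gcdl.
have eu : u = (u %/ g)%Z * g by rewrite divzK // dvdz_gcdr.
set z1 := (z %/ g)%Z in ez; set u1 := (u %/ g)%Z in eu.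
have gpos : `|g|%:Z = g by rewrite /g /gcdz.
have cop : coprimez u1 z1.
  rewrite /coprimez; apply/eqP.
  have : gcdz u1 z1 * `|g|%:Z = g by rewrite mulz_gcdl -eu -ez gcdzC.
  rewrite gpos => h.
  apply: (mulIf g0); by rewrite h mul1r.
have hz1 : z1 * z1 = u1 * (K * z1 + u1 * L).
  apply: (mulIf (mulf_neq0 g0 g0)).
  have -> : z1 * z1 * (g * g) = z ^+ 2 by rewrite [in RHS]ez; ring.
  by rewrite hz [in LHS]ez [in LHS]eu; ring.
have : (u1 %| z1 * z1)%Z by rewrite hz1 dvdz_mulr.
rewrite Gauss_dvdzr // => h.
by rewrite ez eu; apply: dvdz_mul.
Qed.

Local Open Scope ring_scope.
Lemma AUid P m : V P (2 * m) ^+ 2 - (P ^+ 2 + 4) * U P (2 * m) ^+ 2 = 4.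
Proof.
have h := Gid P (2 * m).
rewrite exprM sqrrN expr1n in h.
rewrite VU.
transitivity (4 * (U P (2 * m).+1 ^+ 2 - P * U P (2 * m).+1 * U P (2 * m) - U P (2 * m) ^+ 2)); first ring.
by rewrite h mulr1.
Qed.

Lemma Gsign P j : U P j.+1 ^+ 2 - P * U P j.+1 * U P j - U P j ^+ 2 = if odd j then -1 else 1.
Proof. by rewrite Gid -signr_odd; case: (odd j); rewrite ?expr1 ?expr0. Qed.

Lemma dvd_p p d : prime p -> (d %| p)%N = (d \in [:: 1%N; p]).
Proof.
move=> pp; rewrite !inE; apply/idP/idP; last first.
  by case/orP => /eqP ->; [exact: dvd1n | exact: dvdnn].
by case/primeP: pp => _ hq /hq.
Qed.

Lemma cube_ge (x : int) : 1 <= x -> x <= x ^+ 3.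
Proof. move=> hx; have h2 : 1 <= x ^+ 2 by rewrite exprn_ege1.
by rewrite exprS ler_peMr // (le_trans _ hx). Qed.

Lemma L1 m' i : (i <= m')%N -> (2 * (m' - i) + 1 + 2 * i = 2 * m' + 1)%N. Proof. lia. Qed.
Lemma L2 m' i : (i <= m')%N -> (2 * m'.+1 - 2 * i - 1 = 2 * (m' - i) + 1)%N. Proof. lia. Qed.
Lemma L3 m' i : (i <= m')%N -> (i <= m'.+1 - 1)%N. Proof. lia. Qed.
Lemma L4 m i : m = (2 * i + 1)%N -> (2 * m - 2 * i - 1 = (2 * i).+1)%N. Proof. lia. Qed.
Lemma L5 m' i : (m' < i)%N -> (2 * (i - m'.+1) + 1 + (2 * m' + 1) = 2 * i)%N. Proof. lia. Qed.
Lemma L6 m' i : (m' < i)%N -> (2 * (i - m'.+1) + 2 * m'.+1 + 1 = (2 * i).+1)%N. Proof. lia. Qed.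
Lemma L7 k m' : (2 * k + 2 * m'.+1 + 1 = (2 * k + 1 + (2 * m' + 1)).+1)%N. Proof. lia. Qed.

Lemma main_pos (P : int) (m n : nat) : 0 <= P ->
  (0 < n)%N ->
  (sigma 2 n)%:Z - (n ^ 2)%:Z
    = lucasV P (-1) (2 * m) * n%:Z - (lucasU P (-1) (2 * m)) ^+ 2 + 1 ->
  (`|lucasV P (-1) (2 * m)| + (lucasU P (-1) (2 * m)) ^+ 2 - 1) ^+ 3 < n%:Z ->
  (exists k : nat,
     n%:Z = lucasU P (-1) (2 * k + 1) * lucasU P (-1) (2 * k + 2 * m + 1)
     /\ int_prime (lucasU P (-1) (2 * k + 1))
     /\ int_prime (lucasU P (-1) (2 * k + 2 * m + 1)))
  \/
  (exists k : nat,
     (k <= m - 1)%N /\ (0 < m)%N /\ m <> (2 * k + 1)%N /\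
     n%:Z = lucasU P (-1) (2 * k + 1) * lucasU P (-1) (2 * m - 2 * k - 1)
     /\ int_prime (lucasU P (-1) (2 * k + 1))
     /\ int_prime (lucasU P (-1) (2 * m - 2 * k - 1))).
Proof.
move=> hP hn heq hbig.
have hA := @Vge2 P m hP.
have hid := AUid P m.
have hA0 : 0 <= V P (2 * m) by apply: le_trans hA.
rewrite ger0_norm // in hbig.
move: heq hbig hid hA.
set A := V P (2 * m); set u := U P (2 * m).
move=> heq hbig hid hA.
have hB : 1 <= A + u ^+ 2 - 1 by nia.
have hBn : A + u ^+ 2 - 1 < n%:Z by apply: le_lt_trans hbig; apply: cube_ge.
have u0A : u = 0 -> A = 2 by move=> u0; rewrite u0 in hid; nia.
have n1 : (1 < n)%N by case: n hn hBn {heq hbig} => [|[|n]] //; lia.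
set p := pdiv n.
have pp : prime p by apply: pdiv_prime.
have p1 : (1 < p)%N by apply: prime_gt1.
set a := (n %/ p)%N.
have ena : n = (p * a)%N by rewrite /a mulnC divnK // pdiv_dvd.
have a0 : (0 < a)%N by move: hn; rewrite ena; nia.
have [a1|a1] := eqVneq a 1%N.
  exfalso.
  have np : n = p by rewrite ena a1 muln1.
  have := @sigma_exact n [:: 1%N; p] hn.
  rewrite /= !inE => hs.
  have hs' : sigma 2 n = (1 + p ^ 2)%N.
    rewrite hs ?big_cons ?big_nil ?addn0 //; first by lia.
    by move=> d; rewrite np dvd_p.
  rewrite hs' -np in heq; nia.
have {a1 a0}a1 : (1 < a)%N by lia.
have adn : (a %| n)%N by rewrite ena dvdn_mull.
have pa : (p <= a)%N by apply: pdiv_min_dvd.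
case: (boolP (prime a)) => ap; last first.
  exfalso.
  set r := pdiv a.
  have rp : prime r by apply: pdiv_prime.
  have r1 : (1 < r)%N by apply: prime_gt1.
  set b := (a %/ r)%N.
  have erb : a = (r * b)%N by rewrite /b mulnC divnK // pdiv_dvd.
  have b1 : (1 < b)%N.
    case: b erb => [|[|b]] erb; last by [].
    - by move: a1; rewrite erb; lia.
    - by move: ap; rewrite erb muln1 rp.
  have pr : (p <= r)%N by apply: pdiv_min_dvd => //; apply: dvdn_trans adn; apply: pdiv_dvd.
  have pb : (p <= b)%N by apply: pdiv_min_dvd => //; apply: dvdn_trans adn; rewrite erb dvdn_mull.
  have app : (p * p <= a)%N by rewrite erb; apply: leq_mul.
  have pa' : (p < a)%N by move: app p1; clear; nia.
  have an : (a < n)%N by move: ena a1 p1; clear; nia.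
  have := @sigma_lb n [:: 1%N; p; a; n] hn.
  rewrite big_cons big_cons big_cons big_cons big_nil.
  move=> hs.
  have {}hs : (1 + p ^ 2 + a ^ 2 + n ^ 2 <= sigma 2 n)%N.
    have := hs _ _; rewrite addn0 !addnA; apply.
      rewrite /= !inE; clear -pa' an p1; lia.
    by rewrite /= dvd1n pdiv_dvd adn dvdnn.
  have hi : p%:Z ^+ 2 + a%:Z ^+ 2 + u ^+ 2 <= A * p%:Z * a%:Z.
    rewrite ena in heq hs; clear -heq hs; lia.
  have [u0|un0] := eqVneq u 0.
    move: hi; rewrite u0 u0A //; clear -pa'; nia.
  have hu1 : 1 <= u ^+ 2 by move: un0; clear; nia.
  have h1 : a%:Z <= A * p%:Z by move: hi a1 hu1; clear; nia.
  have h2 : p%:Z <= A by move: h1 app p1; clear; nia.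
  have h3 : n%:Z <= A ^+ 3.
    rewrite ena; move: h1 h2 p1 hA; clear; nia.
  have h4 : A ^+ 3 <= (A + u ^+ 2 - 1) ^+ 3.
    apply: lerXn2r; rewrite ?nnegrE; move: hA hu1; clear; nia.
  move: h3 h4 hbig; clear; lia.
(* a prime *)
have an : (a < n)%N by move: ena a1 p1; clear; nia.
have [epa|npa] := eqVneq p a.
  exfalso.
  have hs : sigma 2 n = (1 + p ^ 2 + (p * p) ^ 2)%N.
    rewrite (@sigma_exact n [:: 1%N; p; (p * p)%N] hn).
    - by rewrite !big_cons big_nil addn0 !addnA.
    - rewrite /= !inE; clear -p1; nia.
    - move=> d; rewrite ena -epa dvd_pq // !inE.
      by case: (d == p); rewrite ?orbT ?orbF.
  rewrite hs ena -epa in heq; rewrite ena -epa in hBn.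
  move: heq hBn hA; clear; nia.
have pa2 : (p < a)%N by rewrite ltn_neqAle npa pa.
have hs : sigma 2 n = (1 + p ^ 2 + a ^ 2 + (p * a) ^ 2)%N.
  rewrite (@sigma_exact n [:: 1%N; p; a; (p * a)%N] hn).
  - by rewrite !big_cons big_nil addn0 !addnA.
  - rewrite /= !inE; rewrite ena in an; clear -p1 pa2 an; lia.
  - by move=> d; rewrite ena dvd_pq.
have heq2 : p%:Z ^+ 2 + a%:Z ^+ 2 + u ^+ 2 = A * p%:Z * a%:Z.
  rewrite hs ena in heq; clear -heq; lia.
have [u0|un0] := eqVneq u 0.
  exfalso; move: heq2; rewrite u0 u0A //; clear -pa2; nia.
have m0 : m <> 0%N by move=> m0; move: un0; rewrite /u m0 eqxx.
set m' := m.-1.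
have em : m = m'.+1 by rewrite /m'; case: (m) m0.
have e2m : (2 * m = (2 * m' + 1).+1)%N by rewrite em; lia.
set c := U P (2 * m' + 1).
have eu : u = U P (2 * m' + 1).+1 by rewrite /u e2m.
have hAc : A = P * u + 2 * c by rewrite /A e2m VU Urec -eu; ring.
have hcu : c ^+ 2 + P * u * c - u ^+ 2 = 1.
  have := Gsign P (2 * m' + 1).
  rewrite -eu -/c addn1 /= oddM /= => h.
  by rewrite -[RHS]opprK -h; ring.
set z := a%:Z - c * p%:Z.
have zq : z ^+ 2 = u * ((P * p%:Z) * z + u * (p%:Z ^+ 2 - 1)).
  apply/eqP; rewrite -subr_eq0.
  have -> : z ^+ 2 - u * ((P * p%:Z) * z + u * (p%:Z ^+ 2 - 1)) =
    (p%:Z ^+ 2 + a%:Z ^+ 2 + u ^+ 2 - (P * u + 2 * c) * p%:Z * a%:Z)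
    + p%:Z ^+ 2 * (c ^+ 2 + P * u * c - u ^+ 2 - 1) by rewrite /z; ring.
  by rewrite -hAc heq2 hcu !subrr mulr0 addr0.
have udz := @dvd_quad u z _ _ un0 zq.
set w := (z %/ u)%Z.
have ez : z = w * u by rewrite divzK.
have wq : p%:Z ^+ 2 + P * p%:Z * w - w ^+ 2 = 1.
  have h : u ^+ 2 * (p%:Z ^+ 2 + P * p%:Z * w - w ^+ 2 - 1) =
      u * ((P * p%:Z) * z + u * (p%:Z ^+ 2 - 1)) - z ^+ 2 by rewrite ez; ring.
  rewrite -zq subrr in h.
  move/eqP: h; rewrite mulf_eq0 expf_eq0 (negbTE un0) andbF /= subr_eq0.
  by move/eqP.
have ea : a%:Z = w * u + c * p%:Z by rewrite -ez /z; ring.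
have odd1 : forall k, odd (2 * k + 1) by move=> k; rewrite addn1 /= oddM.
have odd0 : forall k, odd (2 * k) = false by move=> k; rewrite oddM.
have p0 : 0 < p%:Z by rewrite ltz_nat prime_gt0.
have hpr : int_prime p%:Z by exists p.
have har : int_prime a%:Z by exists a.
have nE : n%:Z = p%:Z * a%:Z by rewrite ena PoszM.
case: (lerP w 0) => hw.
  have [j [ej1 ej2]] := @Lclass P hP p%:Z (- w) p0 (ltac:(by rewrite oppr_ge0)) (ltac:(left; rewrite -wq; ring)).
  have hodd : odd j = false.
    have := Gsign P j; rewrite -ej1 -ej2.
    have -> : p%:Z ^+ 2 - P * p%:Z * - w - (- w) ^+ 2 = 1 by rewrite -wq; ring.
    by case: (odd j).
  set i := j./2.
  have ej : j = (2 * i)%N by rewrite -{1}(odd_double_half j) hodd add0n mul2n.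
  rewrite ej in ej1 ej2.
  have ea2 : a%:Z = c * U P (2 * i).+1 - u * U P (2 * i).
    by rewrite ea -ej1 -[U P (2 * i)]opprK -ej2; ring.
  case: (leqP i m') => him.
    have := Udoc P (2 * (m' - i) + 1) (2 * i).
    rewrite L1 //.
    rewrite -/c -eu exprM sqrrN expr1n mul1r => hd.
    have ea3 : a%:Z = U P (2 * m - 2 * i - 1).
      rewrite em L2 //.
      by rewrite -hd ea2; ring.
    right; exists i; split; first by rewrite em L3.
    split; first by rewrite em.
    split.
      move=> hmi; have h : p%:Z = a%:Z by rewrite ea3 ej1 (@L4 m i hmi).
      by move: npa; rewrite -eqz_nat h eqxx.
    by rewrite -ea3 addn1 -ej1.
  (* form 1, swapped *)
  set k := (i - m'.+1)%N.
  have := Udoc P (2 * k + 1) (2 * m' + 1).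
  rewrite L5 //.
  rewrite -/c -eu exprD exprM sqrrN expr1n mul1r expr1 => hd.
  have ea3 : a%:Z = U P (2 * k + 1) by rewrite ea2; transitivity (- (-1 * U P (2 * k + 1))); [rewrite -hd; ring | ring].
  left; exists k.
  rewrite em L6 //.
  by rewrite -ea3 -ej1 nE mulrC.
(* w > 0 *)
have [j [ej1 ej2]] := @Lclass P hP w p%:Z hw (ltac:(by [])) (ltac:(right; rewrite -[RHS]opprK -wq; ring)).
have hodd : odd j.
  have := Gsign P j; rewrite -ej1 -ej2.
  have -> : w ^+ 2 - P * w * p%:Z - p%:Z ^+ 2 = -1 by rewrite -wq; ring.
  by case: (odd j).
set k := j./2.
have ej : j = (2 * k + 1)%N by rewrite -{1}(odd_double_half j) hodd addnC mul2n.
rewrite ej in ej1 ej2.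
have := Uadd P (2 * k + 1) (2 * m' + 1).
rewrite -/c -eu -ej1 -ej2 => hd.
have ea3 : a%:Z = U P (2 * k + 1 + (2 * m' + 1)).+1 by rewrite hd ea; ring.
left; exists k.
rewrite em L7 -ea3 -ej2 nE.
by [].
Qed.

Lemma Lodd k : odd (2 * k + 1). Proof. by rewrite addn1 /= oddM. Qed.
Lemma Lodd2 k m : odd (2 * k + 2 * m + 1). Proof. by rewrite -mulnDr Lodd. Qed.
Lemma Lidx m k : (k <= m - 1)%N -> (0 < m)%N -> (2 * m - 2 * k - 1 = 2 * (m - k - 1) + 1)%N.
Proof. lia. Qed.

Theorem theorem1p3 (P : int) (m n : nat) :
  (0 < n)%N ->
  (sigma 2 n)%:Z - (n ^ 2)%:Z
    = lucasV P (-1) (2 * m) * n%:Z - (lucasU P (-1) (2 * m)) ^+ 2 + 1 ->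
  (`|lucasV P (-1) (2 * m)| + (lucasU P (-1) (2 * m)) ^+ 2 - 1) ^+ 3 < n%:Z ->
  (exists k : nat,
     n%:Z = lucasU P (-1) (2 * k + 1) * lucasU P (-1) (2 * k + 2 * m + 1)
     /\ int_prime (lucasU P (-1) (2 * k + 1))
     /\ int_prime (lucasU P (-1) (2 * k + 2 * m + 1)))
  \/
  (exists k : nat,
     (k <= m - 1)%N /\ (0 < m)%N /\ m <> (2 * k + 1)%N /\
     n%:Z = lucasU P (-1) (2 * k + 1) * lucasU P (-1) (2 * m - 2 * k - 1)
     /\ int_prime (lucasU P (-1) (2 * k + 1))
     /\ int_prime (lucasU P (-1) (2 * m - 2 * k - 1))).
Proof.
case: (lerP 0 P) => hP; first exact: main_pos.
move=> hn heq hbig.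
have hP' : 0 <= - P by rewrite oppr_ge0 ltW.
have hU : forall j, U P j = if odd j then U (- P) j else - U (- P) j.
  by move=> j; rewrite -{1}(opprK P) (UN (- P)).
have hV : forall j, V P j = if odd j then - V (- P) j else V (- P) j.
  by move=> j; rewrite -{1}(opprK P) (VN (- P)).
rewrite hU hV oddM /= sqrrN in heq hbig.
case: (@main_pos (- P) m n hP' hn heq hbig) => [[k [h1 [h2 h3]]]|[k [h1 [h2 [h3 [h4 [h5 h6]]]]]]].
  by left; exists k; rewrite !hU Lodd Lodd2.
right; exists k; rewrite !hU Lodd (@Lidx m k h1 h2) Lodd -(@Lidx m k h1 h2).
by do 3 (split => //).
Qed.
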